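(* Let $\mathcal{A}=(a_i)_{i=1}^\infty$ be a weakly increasing sequence of positive integers, and let $u,v$ be positive real numbers with $u>v$. If $k\geq 2$ and $\gcd(a_1,\ldots,a_k)=1$, then $$p_\mathcal{A}(un,k)^2>p_\mathcal{A}(un+vn,k)\,p_\mathcal{A}(un-vn,k)$$ holds for every $n>\frac{4u}{kv^2}\prod_{i=1}^k(1+iDk)$ such that $un$, $un+vn$ and $un-vn$ are integers, where $D=\operatorname{lcm}(a_1,\ldots,a_k)$.
   Context: For a weakly increasing sequence $\mathcal{A}=(a_i)_{i\ge1}$ of positive integers and a positive integer $k$, the restricted partition function $p_\mathcal{A}(n,k)$ is defined by $\sum_{n\ge0}p_\mathcal{A}(n,k)x^n=\prod_{i=1}^k(1-x^{a_i})^{-1}$; equivalently, it counts the partitions of $n$ whose parts lie in the multiset $\{a_1,\ldots,a_k\}$ (equal values with different indices count as distinct colors). Also $p_\mathcal{A}(n,k)=0$ for $n<0$. *)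

(* Defs.v *)
From mathcomp Require Import all_boot all_order all_algebra.
Set Implicit Arguments. Unset Strict Implicit. Unset Printing Implicit Defensive.

(* The sequence A = (a_i)_{i>=1} is a function a : nat -> nat; only the values
   a 1, a 2, ... are used (a 0 is ignored).
   pA a n k = p_A(n,k) = number of tuples (m_1,...,m_k) of nonnegative
   integers with m_1 a_1 + ... + m_k a_k = n (coefficient of x^n in
   prod_{i=1}^k (1 - x^{a_i})^{-1}). *)
Fixpoint pA (a : nat -> nat) (n k : nat) {struct k} : nat :=
  match k with
  | 0 => (n == 0)%N
  | k'.+1 => \sum_(j < n.+1 | (j * a k'.+1 <= n)%N) pA a (n - j * a k'.+1) k'
  end.

Definition gcdA (a : nat -> nat) (k : nat) : nat := \big[gcdn/0]_(1 <= i < k.+1) a i.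
Definition lcmA (a : nat -> nat) (k : nat) : nat := \big[lcmn/1]_(1 <= i < k.+1) a i.

(* Main.v *)
Require Import Defs.
From mathcomp Require Import all_boot all_order all_algebra.
From mathcomp Require Import zify ring lra.
Import GRing.Theory.
Set Implicit Arguments. Unset Strict Implicit. Unset Printing Implicit Defensive.

Lemma sum_sel (F : nat -> nat) L x : \sum_(t < L) F t * (x == nat_of_ord t) = (x < L) * F x.
Proof.
elim: L => [|L IH]; first by rewrite big_ord0.
rewrite big_ord_recr /= IH [in RHS]ltnS [in RHS]leq_eqVlt.
case: (ltngtP x L) => [h|h|->]; rewrite ?eqxx /= ?muln0 ?mul0n ?mul1n ?muln1 ?addn0 //.
Qed.

Lemma sum_dvd c t L : 0 < c -> \sum_(j < L) (nat_of_ord j * c == t) = ((c %| t) && (t %/ c < L)).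
Proof.
move=> c0; elim: L => [|L IH]; first by rewrite big_ord0 andbF.
rewrite big_ord_recr /= IH [in RHS]ltnS [in RHS]leq_eqVlt.
case dv: (c %| t) => /=.
- have -> : (L * c == t) = (t %/ c == L).
    by rewrite -{1}(divnK dv) eqn_pmul2r // eq_sym.
  by case: (ltngtP (t %/ c) L).
- have -> : (L * c == t) = false.
    by apply/negbTE; apply: contraFN dv => /eqP <-; rewrite dvdn_mull.
  by [].
Qed.

Lemma reindex_mult (F : nat -> nat) c M : 0 < c ->
  \sum_(t < M.+1) F t * (c %| t) = \sum_(j < M.+1 | j * c <= M) F (j * c).
Proof.
move=> c0.
have E : forall t : 'I_M.+1, F t * (c %| t) = \sum_(j < M.+1) F t * (j * c == t).
  move=> t; rewrite -big_distrr /= sum_dvd //.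
  case dv: (c %| t) => //=.
  by rewrite ltnS (leq_trans (leq_div _ _)) // -ltnS.
rewrite (eq_bigr _ (fun t _ => E t)) exchange_big /= [RHS]big_mkcond /=.
apply: eq_bigr => j _.
rewrite (eq_bigr (fun t : 'I_M.+1 => F t * (j * c == t))) //.
rewrite (sum_sel F M.+1 (j * c)) ltnS.
by case: (j * c <= M); rewrite /= ?mul1n ?mul0n.
Qed.

Lemma sumrnat (I : Type) (r : seq I) (P : pred I) (F : I -> nat) :
  (\sum_(i <- r | P i) F i)%R = \sum_(i <- r | P i) F i.
Proof. by []. Qed.

Lemma mulrnat (m n : nat) : (m * n)%R = m * n.
Proof. by []. Qed.

Definition Gen (c : nat -> nat) (L : nat) (i : nat) : {poly nat} :=
  (\sum_(j < L) 'X^(j * c i))%R.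

Lemma coefGen c L i t : 0 < c i -> t < L ->
  ((Gen c L i)`_t)%R = (c i %| t).
Proof.
move=> c0 tL; rewrite /Gen coef_sum.
under eq_bigr => j _ do rewrite coefXn natn eq_sym.
change (\sum_(j < L) ((nat_of_ord j * c i == t) : nat) = (c i %| t)).
rewrite sum_dvd //.
case dv: (c i %| t) => //=.
by rewrite (leq_ltn_trans (leq_div _ _)).
Qed.

Lemma coef_prodGen c (Ls : nat -> nat) T k :
  (forall i, 0 < i -> 0 < c i) -> (forall i, 0 < i <= k -> T < Ls i) ->
  forall M, M <= T -> ((\prod_(i < k) Gen c (Ls i.+1) i.+1)%R`_M)%R = pA c M k.
Proof.
move=> cpos; elim: k => [|k IH] LT M MT.
  by rewrite big_ord0 coef1 natn.
rewrite big_ord_recr /= coefMr sumrnat.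
rewrite [LHS](eq_bigr (fun j : 'I_M.+1 => pA c (M - j) k * (c k.+1 %| j))); last first.
  move=> j _; rewrite mulrnat IH ?coefGen //.
  all: try (by move=> i /andP[i0 ik]; apply: LT; rewrite i0 (leq_trans ik)).
  all: try (by apply: leq_trans MT; apply: leq_subr).
  all: try (by apply: cpos).
  apply: (leq_ltn_trans _ (LT _ _)); first by rewrite (leq_trans (ltnSE (ltn_ord j))).
  by rewrite ltnSn.
by rewrite (reindex_mult (fun t => pA c (M - t) k)) //; apply: cpos.
Qed.

Definition Rp (a : nat -> nat) (D i : nat) : {poly nat} :=
  (\sum_(r < D %/ a i) 'X^(r * a i))%R.

Definition HD (D T : nat) : {poly nat} := (\sum_(q < T.+1) 'X^(q * D))%R.

Lemma split_geom (x b m : nat) :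
  (\sum_(j < b * m) 'X^(j * x) = (\sum_(r < b) 'X^(r * x)) * \sum_(q < m) 'X^(q * (x * b)) :> {poly nat})%R.
Proof.
elim: m => [|m IH]; first by rewrite muln0 !big_ord0 mulr0.
rewrite mulnSr big_split_ord /= IH big_ord_recr /= mulrDr; congr (_ + _)%R.
rewrite big_distrl /=; apply: eq_bigr => r _.
by rewrite -exprD; congr ('X^_)%R; lia.
Qed.

Lemma lcmA_dvd a k i : 0 < i <= k -> a i %| lcmA a k.
Proof.
elim: k => [|k IH] /andP[i0 ik]; first by lia.
rewrite /lcmA big_nat_recr //= -/(lcmA a k).
case: (ltngtP i k.+1) => h.
- by apply: dvdn_trans (dvdn_lcml _ _); apply: IH; lia.
- lia.
- by rewrite h dvdn_lcmr.
Qed.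

Lemma lcmA_gt0 a k : (forall i, 0 < i -> 0 < a i) -> 0 < lcmA a k.
Proof.
move=> ap; elim: k => [|k IH]; first by rewrite /lcmA big_geq.
by rewrite /lcmA big_nat_recr //= -/(lcmA a k) lcmn_gt0 IH ap.
Qed.

Definition piA a D k : {poly nat} := (\prod_(i < k) Rp a D i.+1)%R.

Lemma pA_formula a k N :
  (forall i, 0 < i -> 0 < a i) ->
  pA a N k = \sum_(R < N.+1) ((piA a (lcmA a k) k)`_R)%R * pA (fun _ => lcmA a k) (N - R) k.
Proof.
move=> ap; set D := lcmA a k.
have Dp : 0 < D by apply: lcmA_gt0.
have dv : forall i, 0 < i <= k -> a i * (D %/ a i) = D.
  by move=> i ik; rewrite mulnC divnK //; apply: lcmA_dvd.
have bp : forall i, 0 < i <= k -> 0 < D %/ a i.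
  move=> i ik; move: (dv i ik); case: (D %/ a i) => //; lia.
rewrite -(@coef_prodGen a (fun i => D %/ a i * N.+1) N k ap) //; last first.
  move=> i ik; have := bp i ik; case: (D %/ a i) => // b _; lia.
have -> : (\prod_(i < k) Gen a (D %/ a i.+1 * N.+1) i.+1 =
   piA a D k * \prod_(i < k) Gen (fun _ => D) N.+1 i.+1)%R.
  rewrite /piA -big_split /=; apply: eq_bigr => i _.
  rewrite /Gen /Rp split_geom dv //; apply/andP; split => //.
rewrite (coefM (piA a D k)) sumrnat; apply: eq_bigr => R _.
rewrite mulrnat (@coef_prodGen (fun _ => D) (fun _ => N.+1) N k) //.
by rewrite leq_subr.
Qed.

Definition fib (D : nat) (p : {poly nat}) (rho : nat) : nat :=
  \sum_(R < size p | R %% D == rho %% D) (p`_R)%R.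

Lemma fibE D (p : {poly nat}) rho L : size p <= L ->
  fib D p rho = \sum_(R < L | R %% D == rho %% D) (p`_R)%R.
Proof.
move=> sL; rewrite /fib (@big_ord_widen_cond _ 0 addn _ _ (fun R => R %% D == rho %% D) (fun R => (p`_R)%R) sL).
rewrite [RHS](bigID (fun i : 'I_L => i < size p)) /= [X in _ = _ + X]big1 ?addn0 //.
by move=> i /andP[_ h]; rewrite nth_default // leqNgt.
Qed.

Lemma fib_mod D (p : {poly nat}) rho rho' : rho %% D = rho' %% D -> fib D p rho = fib D p rho'.
Proof. by move=> h; rewrite /fib h. Qed.

Lemma fibD D (p q : {poly nat}) rho : fib D (p + q)%R rho = fib D p rho + fib D q rho.
Proof.
have sp : size p <= size p + size q by apply: leq_addr.
have sq : size q <= size p + size q by apply: leq_addl.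
have spq : size (p + q)%R <= size p + size q.
  by apply: leq_trans (size_polyD _ _) _; rewrite geq_max sp sq.
rewrite (fibE _ _ spq) (fibE _ _ sp) (fibE _ _ sq) -big_split /=.
by apply: eq_bigr => i _; rewrite coefD.
Qed.

Lemma fibX D (p : {poly nat}) m rho : fib D ('X^m * p)%R (rho + m) = fib D p rho.
Proof.
have s : size ('X^m * p)%R <= m + size p.
  by apply: leq_trans (size_polyMleq _ _) _; rewrite size_polyXn.
rewrite (fibE _ _ s) (fibE _ _ (leqnn _)) big_split_ord /= big1 ?add0n.
  apply: eq_big => [i|i _] /=; first by rewrite (addnC rho) eqn_modDl.
  by rewrite coefXnM ltnNge leq_addr /= addKn.
move=> i _; rewrite coefXnM /=.
by rewrite ltn_ord.
Qed.

Lemma Rp_shift a D i : a i * (D %/ a i) = D ->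
  (Rp a D i * 'X^(a i) + 1 = Rp a D i + 'X^D)%R.
Proof.
move=> dv; rewrite /Rp; set b := D %/ a i.
have E1 := big_ord_recl b (fun r : 'I_b.+1 => ('X^(r * a i) : {poly nat})%R).
have E2 := big_ord_recr b (fun r : 'I_b.+1 => ('X^(r * a i) : {poly nat})%R).
rewrite /= in E1 E2.
have -> : ('X^D = 'X^(b * a i) :> {poly nat})%R by rewrite mulnC dv.
rewrite -E2 E1 mul0n expr0 addrC big_distrl /=; congr (_ + _)%R.
by apply: eq_bigr => r _; rewrite -exprD mulSn addnC.
Qed.

Lemma fib_invX a k (i : 'I_k) rho : (forall j, 0 < j -> 0 < a j) ->
  fib (lcmA a k) (piA a (lcmA a k) k) (rho + a i.+1) =
  fib (lcmA a k) (piA a (lcmA a k) k) rho.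
Proof.
move=> ap; set D := lcmA a k; set P := piA a D k.
have dv : a i.+1 * (D %/ a i.+1) = D.
  by rewrite mulnC divnK //; apply: lcmA_dvd; rewrite /= ltn_ord.
set P' := (\prod_(j < k | j != i) Rp a D j.+1)%R.
have PE : P = (Rp a D i.+1 * P')%R by rewrite /P /piA (bigD1 i).
have key : (P * 'X^(a i.+1) + P' = P + 'X^D * P')%R.
  by rewrite PE mulrC mulrA (mulrC _ (Rp _ _ _)) -{2}(mul1r P') -mulrDl Rp_shift // mulrDl mulrC.
have h1 : forall r, fib D ('X^D * P')%R r = fib D P' r.
  by move=> r; rewrite (@fib_mod _ _ r (r + D)) ?fibX // modnDr.
have h2 : forall r, fib D ('X^(a i.+1) * P)%R r = fib D P r.
  move=> r.
  apply/eqP; rewrite -(eqn_add2r (fib D P' r)) {2}(_ : fib D P' r = fib D ('X^D * P')%R r) // -!fibD.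
  by rewrite mulrC key.
by rewrite -(h2 (rho + a i.+1)) fibX.
Qed.

Lemma bezout_mod g c D : 0 < c -> c %| D -> 0 < D ->
  exists x y, (x * g + y * c) %% D = gcdn g c %% D.
Proof.
move=> c0 cD D0.
case: (posnP g) => [->|g0]; first by exists 0, 1; rewrite gcd0n mul0n add0n mul1n.
case: (egcdnP c g0) => km kn E _.
have bc : D %/ c * c = D by rewrite divnK.
move: bc; case Eb: (D %/ c) => [|b] bc; first by move: bc D0 => /= <-.
exists km, (kn * b); rewrite E.
have -> : kn * c + gcdn g c + kn * b * c = kn * D + gcdn g c.
  by rewrite -bc; nia.
by rewrite modnMDl.
Qed.

Lemma gcdA_S a j : gcdA a j.+1 = gcdn (gcdA a j) (a j.+1).
Proof. by rewrite /gcdA big_nat_recr. Qed.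

Lemma fib_const a k : (forall j, 0 < j -> 0 < a j) -> gcdA a k = 1 ->
  forall rho, fib (lcmA a k) (piA a (lcmA a k) k) rho =
              fib (lcmA a k) (piA a (lcmA a k) k) 0.
Proof.
move=> ap hg; set D := lcmA a k; set F := fib D (piA a D k).
have D0 : 0 < D by apply: lcmA_gt0.
pose inv t := forall r, F (r + t) = F r.
have invD : forall s t, inv s -> inv t -> inv (s + t).
  by move=> s t hs ht r; rewrite addnA ht hs.
have invM : forall x t, inv t -> inv (x * t).
  move=> x t ht; elim: x => [|x IH] r; first by rewrite mul0n addn0.
  by rewrite mulSn; apply: invD.
have inva : forall i, 0 < i <= k -> inv (a i).
  move=> i /andP[i0 ik] r; case: i i0 ik => // i _ ik.
  exact: (@fib_invX a k (Ordinal ik) r ap).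
have claim : forall j, j <= k -> exists t, inv t /\ t %% D = gcdA a j %% D.
  elim=> [|j IH] jk.
    by exists 0; split; [move=> r; rewrite addn0 | rewrite /gcdA big_geq].
  have [t [it ht]] := IH (ltnW jk).
  have cD : a j.+1 %| D by apply: lcmA_dvd; rewrite jk.
  have [x [y hxy]] := bezout_mod (gcdA a j) (ap _ (ltn0Sn j)) cD D0.
  exists (x * t + y * a j.+1); split.
    by apply: invD; apply: invM => //; apply: inva; rewrite jk.
  by rewrite gcdA_S -hxy -modnDml -modnMmr ht modnMmr modnDml.
have [t [it ht]] := claim k (leqnn k).
rewrite hg in ht.
have step : forall r, F r.+1 = F r.
  move=> r; rewrite -(it r) /F; apply: fib_mod.
  by rewrite -addn1 -[in LHS]modnDmr -[in RHS]modnDmr ht.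
by elim=> [|r IH] //; rewrite step.
Qed.

Lemma Rp_coef0 a D i : 0 < a i -> 0 < D %/ a i -> ((Rp a D i)`_0)%R = 1.
Proof.
move=> a0 b0; rewrite /Rp coef_sum.
under eq_bigr => j _ do rewrite coefXn natn eq_sym.
change (\sum_(j < D %/ a i) ((nat_of_ord j * a i == 0) : nat) = 1).
by rewrite sum_dvd // dvdn0 div0n b0.
Qed.

Lemma size_Rp a D i : 0 < a i -> a i * (D %/ a i) = D -> size (Rp a D i) <= D.
Proof.
move=> a0 dv; apply: leq_trans (size_sum _ _ _) _.
apply/bigmax_leqP => r _; rewrite size_polyXn.
have := ltn_ord r; move: (nat_of_ord r) dv => x; move: (D %/ a i) => b <-; nia.
Qed.

Lemma size_pi a D k : (forall i, 0 < i <= k -> 0 < a i) ->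
  (forall i, 0 < i <= k -> a i * (D %/ a i) = D) ->
  size (piA a D k) <= k * D.-1 + 1.
Proof.
rewrite /piA; elim: k => [|k IH] ap dv; first by rewrite big_ord0 size_poly1.
rewrite big_ord_recr /=; apply: leq_trans (size_polyMleq _ _) _.
have h1 := IH (fun i hi => ap i (ltac:(lia))) (fun i hi => dv i (ltac:(lia))).
have h2 := size_Rp (ap k.+1 (ltac:(lia))) (dv k.+1 (ltac:(lia))).
case: D h1 h2 {dv IH} => [|D] /= h1 h2; move: (size _) (size _) h1 h2 => x y h1 h2; rewrite -subn1; nia.
Qed.

Lemma fib0_ge1 a k : (forall i, 0 < i -> 0 < a i) ->
  1 <= fib (lcmA a k) (piA a (lcmA a k) k) 0.
Proof.
move=> ap; set D := lcmA a k.
have D0 : 0 < D by apply: lcmA_gt0.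
have c0 : ((piA a D k)`_0)%R = 1.
  rewrite /piA coef0_prod; apply: big1 => i _; apply: Rp_coef0; first exact: ap.
  have dv : a i.+1 * (D %/ a i.+1) = D.
    by rewrite mulnC divnK //; apply: lcmA_dvd; rewrite /= ltn_ord.
  by move: dv; case: (D %/ a i.+1) => //; rewrite muln0 => E; move: D0; rewrite -E.
rewrite (@fibE _ _ _ (size (piA a D k)).+1) // (bigD1 ord0) //=.
by rewrite c0.
Qed.

Lemma g_ndvd D k t : ~~ (D %| t) -> pA (fun _ => D) t k = 0.
Proof.
elim: k t => [|k IH] t nd /=.
  by case: eqP nd => // ->; rewrite dvdn0.
apply: big1 => j jt; apply: IH; apply: contra nd => h.
by rewrite -(subnK jt) dvdn_add // dvdn_mull.
Qed.

Lemma hockey q k : \sum_(j < q.+1) 'C(q - j + k, k) = 'C(q + k.+1, k.+1).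
Proof.
elim: q => [|q IH]; first by rewrite big_ord1 subnn add0n add0n !binn.
rewrite big_ord_recl /= subn0.
under eq_bigr => j _ do rewrite /bump /= add1n subSS.
have E1 : q.+1 + k.+1 = (q + k.+1).+1 by lia.
have E2 : q.+1 + k = q + k.+1 by lia.
by rewrite IH E1 E2 binS addnC.
Qed.

Lemma conv_sum D q (F : nat -> nat) : 0 < D ->
  \sum_(j < (q * D).+1 | j * D <= q * D) F (q * D - j * D) = \sum_(j < q.+1) F ((q - j) * D).
Proof.
move=> D0; rewrite (@big_ord_widen _ _ _ q.+1 (q * D).+1 (fun j => F ((q - j) * D))); last first.
  by rewrite ltnS leq_pmulr.
by apply: eq_big => [j|j _]; rewrite ?leq_pmul2r ?mulnBl.
Qed.

Lemma g_mul D k q : 0 < D -> pA (fun _ => D) (q * D) k.+1 = 'C(q + k, k).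
Proof.
move=> D0; elim: k q => [|k IH] q.
  rewrite /= (conv_sum q (fun t => nat_of_bool (t == 0))) // big_ord_recr /= subnn mul0n eqxx big1 ?bin0 //.
  move=> j _; rewrite muln_eq0 (gtn_eqF D0) orbF subn_eq0 leqNgt ltn_ord //.
rewrite [LHS]/= (conv_sum q (fun t => pA (fun _ => D) t k.+1)) //.
under eq_bigr => j _ do rewrite IH.
by rewrite hockey.
Qed.

Lemma sum_cond_le (F : nat -> nat) (Q : pred nat) n L : n <= L ->
  \sum_(R < n | Q R) F R <= \sum_(R < L | Q R) F R.
Proof.
move=> nL; rewrite (@big_ord_widen_cond _ 0 addn _ _ Q F nL).
rewrite [X in _ <= X](bigID (fun i : 'I_L => i < n)) /=; exact: leq_addr.
Qed.

Lemma f_upper a m N : (forall i, 0 < i -> 0 < a i) -> gcdA a m.+1 = 1 ->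
  pA a N m.+1 <= fib (lcmA a m.+1) (piA a (lcmA a m.+1) m.+1) 0 * 'C(N %/ lcmA a m.+1 + m, m).
Proof.
move=> ap hg; rewrite (pA_formula _ _ ap).
set D := lcmA a m.+1; set P := piA a D m.+1.
have D0 : 0 < D by apply: lcmA_gt0.
set C := 'C(N %/ D + m, m).
apply: (@leq_trans (\sum_(R < N.+1) (P`_R)%R * (R %% D == N %% D) * C)).
  apply: leq_sum => R _; rewrite -mulnA leq_mul2l; apply/orP; right.
  have RN : R <= N by rewrite -ltnS.
  case dv: (D %| N - R).
  - rewrite eq_sym eqn_mod_dvd // dv mul1n -(divnK dv) g_mul //.
    by rewrite leq_bin2l // leq_add2r leq_div2r // leq_subr.
  - by rewrite g_ndvd ?dv.
rewrite -big_distrl /= leq_mul2r; apply/orP; right.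
rewrite -(fib_const ap hg N) -/D -/P.
rewrite (@fibE D P N (maxn N.+1 (size P))) ?leq_maxr //.
rewrite [X in X <= _](eq_bigr (fun i : 'I_N.+1 => if i %% D == N %% D then (P`_i)%R else 0)); last first.
  by move=> i _; case: ifP => _; rewrite ?muln1 ?muln0.
rewrite -big_mkcond /=.
by apply: (@sum_cond_le (fun R => (P`_R)%R) (fun R => R %% D == N %% D)); rewrite leq_maxl.
Qed.

Lemma predle d m : 0 < d -> m.+1 * d.-1 + 1 <= m.+1 * d.
Proof. by case: d => // d _ /=; nia. Qed.

Lemma f_lower a m N : (forall i, 0 < i -> 0 < a i) -> gcdA a m.+1 = 1 ->
  m.+1 * lcmA a m.+1 <= N ->
  fib (lcmA a m.+1) (piA a (lcmA a m.+1) m.+1) 0 * 'C(N %/ lcmA a m.+1, m) <= pA a N m.+1.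
Proof.
move=> ap hg hN; rewrite (pA_formula _ _ ap).
set D := lcmA a m.+1; set P := piA a D m.+1.
have D0 : 0 < D by apply: lcmA_gt0.
have sP : size P <= m.+1 * D.-1 + 1.
  apply: size_pi => [i /andP[i0 _]|i ik]; first exact: ap.
  by rewrite mulnC divnK //; apply: lcmA_dvd.
have sPN : size P <= N.+1.
  by apply: (leq_trans sP); apply: leq_trans (predle m D0) _; apply: (leq_trans hN).
rewrite -(fib_const ap hg N) -/D -/P (fibE _ _ sPN) big_distrl.
apply: (@leq_trans (\sum_(R < N.+1 | R %% D == N %% D) (P`_R)%R * pA (fun _ => D) (N - R) m.+1)).
  apply: leq_sum => R hR; rewrite leq_mul2l; apply/orP.
  case: eqP => [|PR]; [by left|right].
  have RsP : R < size P.
    by rewrite ltnNge; apply/negP => h; apply: PR; rewrite nth_default.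
  have RN : R <= N by rewrite -ltnS.
  have dv : D %| N - R by rewrite -eqn_mod_dvd // eq_sym.
  rewrite -(divnK dv) g_mul //.
  apply: leq_bin2l.
  have RD : R %/ D <= m.
    rewrite -ltnS ltn_divLR //; apply: leq_trans (predle m D0); rewrite mulnC.
    by apply: leq_trans RsP _; rewrite (leq_trans sP) // mulnC.
  have -> : N %/ D = (N - R) %/ D + R %/ D.
    by rewrite -divnMDl // divnK // subnK.
  lia.
rewrite [X in _ <= X](bigID (fun R : 'I_N.+1 => R %% D == N %% D)).
exact: leq_addr.
Qed.

Import Order.TTheory GRing.Theory Num.Theory.
Local Open Scope ring_scope.

Lemma real_part (R : realFieldType) (u v n P K d n0 M : R) :
  0 < v -> v < u -> 1 <= d -> 2 <= K -> K * d * K <= P ->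
  4 * u / (K * v ^+ 2) * P < n -> n0 = u * n -> M = v * n ->
  K * d <= n0 /\ K * d * (2 * n0 + K * d) <= M ^+ 2.
Proof.
move=> v0 vu d1 K2 hP hn e0 eM.
have u0 : 0 < u by apply: lt_trans vu.
have Kv : 0 < K * v ^+ 2 by apply: mulr_gt0; [lra | apply: exprn_gt0].
have P0 : 0 < P by apply: lt_le_trans hP; nra.
have h1 : 4 * u * P < n * (K * v ^+ 2).
  have -> : 4 * u * P = (4 * u / (K * v ^+ 2) * P) * (K * v ^+ 2).
    by field; rewrite (gt_eqF v0) andTb; apply/eqP; lra.
  by rewrite ltr_pM2r.
have n0p : 0 < n.
  apply: le_lt_trans hn; apply: mulr_ge0 => //; last by apply: ltW.
  by apply: divr_ge0; [lra | apply: ltW].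
have h2 : 4 * P < n0 * K.
  have hu2 : 0 < u * u by apply: mulr_gt0.
  rewrite -(ltr_pM2r hu2).
  have e1 : 4 * P * (u * u) = (4 * u * P) * u by ring.
  have e2 : n * (K * v ^+ 2) * u = n0 * K * (v * v) by rewrite e0; ring.
  have hv : v * v < u * u by nra.
  have hK : 0 < n0 * K by rewrite e0; apply: mulr_gt0; [apply: mulr_gt0 | lra].
  rewrite e1; apply: (@lt_trans _ _ (n * (K * v ^+ 2) * u)); first by rewrite ltr_pM2r.
  by rewrite e2 ltr_pM2l.
have h3 : K * d <= n0 by nra.
split => //.
have h4 : 4 * P * n0 < K * M ^+ 2.
  rewrite eM e0; nra.
have K0 : 0 < K by lra.
rewrite -(ler_pM2l K0).
have n00 : 0 <= n0 by apply: le_trans h3; nra.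
have a1 : K * d * K * n0 <= P * n0 by apply: ler_wpM2r.
have a2 : K * K * d * (K * d) <= K * K * d * n0 by apply: ler_wpM2l => //; nra.
nra.
Qed.

Lemma real_j (R : realFieldType) (d q1 q2 x0 j K n0 n1 n2 M : R) :
  1 <= d -> 0 <= q1 -> 0 <= q2 -> 0 <= x0 -> 1 <= j -> j <= K ->
  q1 * d <= n1 -> q2 * d <= n2 -> n0 < (x0 + K) * d ->
  n1 = n0 + M -> n2 = n0 - M -> K * d <= n0 ->
  K * d * (2 * n0 + K * d) <= M ^+ 2 ->
  (q1 + j) * (q2 + j) < (x0 + j) ^+ 2.
Proof.
move=> d1 q10 q20 x00 j1 jK h1 h2 h0 e1 e2 hK hM.
have d0 : 0 < d * d by nra.
rewrite -(ltr_pM2r d0).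
set A := n0 - K * d + j * d.
have A0 : 0 < A by rewrite /A; nra.
have hx : A < (x0 + j) * d by rewrite /A; nra.
have hx2 : A * A < ((x0 + j) * d) * ((x0 + j) * d) by nra.
have f1 : 0 <= q1 * d + j * d by nra.
have f2 : 0 <= q2 * d + j * d by nra.
have g1 : (q1 * d + j * d) * (q2 * d + j * d) <= (n1 + j * d) * (n2 + j * d).
  apply: ler_pM => //; lra.
have g2 : (n1 + j * d) * (n2 + j * d) <= A * A.
  rewrite e1 e2 /A; nra.
have -> : (q1 + j) * (q2 + j) * (d * d) = (q1 * d + j * d) * (q2 * d + j * d) by ring.
have -> : (x0 + j) ^+ 2 * (d * d) = ((x0 + j) * d) * ((x0 + j) * d) by ring.
lra.
Qed.

Lemma ffact_ineq (m X Y Z : nat) :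
  (forall j, (1 <= j <= m)%N -> ((Y + j) * (Z + j) < (X + j) ^ 2)%N) ->
  ((Y + m) ^_ m * (Z + m) ^_ m <= ((X + m) ^_ m) ^ 2)%N /\
  ((0 < m)%N -> ((Y + m) ^_ m * (Z + m) ^_ m < ((X + m) ^_ m) ^ 2)%N).
Proof.
elim: m => [|m IH] h; first by rewrite !ffactn0.
have [IH1 _] := IH (fun j hj => h j (ltac:(lia))).
have hm := h m.+1 (ltac:(lia)).
have pos : (0 < (X + m) ^_ m)%N by rewrite ffact_gt0 leq_addl.
rewrite !addnS !ffactSS.
have : ((Y + m).+1 * (Z + m).+1 < (X + m).+1 ^ 2)%N by rewrite -!addnS.
move: IH1 pos; move: ((Y + m) ^_ m) ((Z + m) ^_ m) ((X + m) ^_ m) => y z x.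
move: (Y + m).+1 (Z + m).+1 (X + m).+1 => y' z' x' h1 pos h2.
split => [|_]; nia.
Qed.

Theorem corollary3p3 (R : realFieldType) (a : nat -> nat)
  (a_pos : forall i, (1 <= i)%N -> (0 < a i)%N)
  (a_incr : forall i j, (1 <= i)%N -> (i <= j)%N -> (a i <= a j)%N)
  (u v : R) (hv : 0 < v) (huv : v < u)
  (k : nat) (hk : (2 <= k)%N) (hgcd : gcdA a k = 1%N)
  (n : R)
  (hn : (4 * u / (k%:R * v ^+ 2)) *
          \prod_(1 <= i < k.+1) (1 + (i * lcmA a k * k)%N%:R) < n)
  (N0 N1 N2 : nat)
  (h0 : u * n = N0%:R) (h1 : u * n + v * n = N1%:R) (h2 : u * n - v * n = N2%:R) :
  (pA a N1 k * pA a N2 k < (pA a N0 k) ^ 2)%N.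
Proof.
have [m km] : exists m, k = m.+1 by exists k.-1; lia.
subst k.
have m1 : (0 < m)%N by lia.
set D := lcmA a m.+1 in hn *.
have D0 : (0 < D)%N by apply: lcmA_gt0.
set P := \prod_(1 <= i < m.+2) (1 + (i * D * m.+1)%N%:R : R) in hn.
have hP : (m.+1)%:R * D%:R * (m.+1)%:R <= P.
  rewrite /P big_nat_recr //=.
  have g1 : 1 <= \prod_(1 <= i < m.+1) (1 + (i * D * m.+1)%N%:R : R).
    apply: (big_ind (fun x : R => 1 <= x)) => //.
      by move=> x y hx hy; apply: mulr_ege1.
    by move=> i _; rewrite lerDl.
  have g2 : (m.+1)%:R * D%:R * (m.+1)%:R <= (1 + (m.+1 * D * m.+1)%N%:R : R).
    by rewrite !natrM lerDr.
  apply: le_trans g2 _; rewrite -[X in X <= _]mul1r; apply: ler_pM => //.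
    by have := ler0n R (m.+1 * D * m.+1); rewrite !natrM; lra.
have [hN0 hM] := real_part (M := v * n) (d := D%:R) (K := (m.+1)%:R) hv huv (ltac:(by rewrite ler1n)) (ltac:(by rewrite ler_nat)) hP hn (esym h0) erefl.
have hN0n : (m.+1 * D <= N0)%N by rewrite -(ler_nat R) natrM.
set Q0 := (N0 %/ D)%N; set Q1 := (N1 %/ D)%N; set Q2 := (N2 %/ D)%N.
have Q0m : (m.+1 <= Q0)%N.
  by rewrite /Q0 -(mulnK m.+1 D0) leq_div2r.
set X := (Q0 - m)%N.
have QX : Q0 = (X + m)%N by rewrite /X subnK //; lia.
have perj : forall j, (1 <= j <= m)%N -> ((Q1 + j) * (Q2 + j) < (X + j) ^ 2)%N.
  move=> j /andP[j1 jm].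
  rewrite -(ltr_nat R) natrX !natrM !natrD.
  apply: (@real_j R D%:R Q1%:R Q2%:R X%:R j%:R (m.+1)%:R N0%:R N1%:R N2%:R (v * n)).
  - by rewrite ler1n.
  - exact: ler0n.
  - exact: ler0n.
  - exact: ler0n.
  - by rewrite ler1n.
  - by rewrite ler_nat; lia.
  - by rewrite -natrM ler_nat leq_trunc_div.
  - by rewrite -natrM ler_nat leq_trunc_div.
  - rewrite -natrD -natrM ltr_nat.
    have := ltn_ceil N0 D0; rewrite -/Q0 QX.
    by rewrite (_ : (X + m.+1)%N = (X + m).+1) ?addnS.
  - by rewrite -h1 h0.
  - by rewrite -h2 h0.
  - exact: hN0.
  - exact: hM.
have [_ strict] := ffact_ineq perj.
have hC : ('C(Q1 + m, m) * 'C(Q2 + m, m) < 'C(Q0, m) ^ 2)%N.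
  have fpos := fact_gt0 m.
  have b0 := bin_ffact Q0 m; have b1 := bin_ffact (Q1 + m) m; have b2 := bin_ffact (Q2 + m) m.
  have st := strict m1; rewrite -QX -b0 -b1 -b2 in st.
  move: st fpos; move: ('C(Q1 + m, m)) ('C(Q2 + m, m)) ('C(Q0, m)) (m`!) => x y z f st fpos.
  rewrite ltnNge; apply/negP => hle.
  have : (z ^ 2 * (f * f) <= x * y * (f * f))%N by rewrite leq_mul2r hle orbT.
  rewrite leqNgt => /negP; apply; move: st; rewrite !expnMn; nia.
set c := fib D (piA a D m.+1) 0.
have c1 : (1 <= c)%N by apply: fib0_ge1.
have ap : forall i, (0 < i)%N -> (0 < a i)%N by move=> i; apply: a_pos.
have u1 := f_upper N1 ap hgcd.
have u2 := f_upper N2 ap hgcd.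
have l0 := f_lower ap hgcd hN0n.
rewrite -/D -/c -/Q1 -/Q2 in u1 u2; rewrite -/D -/c -/Q0 in l0.
move: u1 u2 l0 hC c1.
move: (pA a N1 m.+1) (pA a N2 m.+1) (pA a N0 m.+1) ('C(Q1 + m, m)) ('C(Q2 + m, m)) ('C(Q0, m)) c.
move=> f1 f2 f0 C1 C2 C0 cc u1 u2 l0 hC c1.
nia.
Qed.
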